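(* Let $h,v$ be permutations of $\Lambda=\{1,\dots,d\}$ and let $(\lambda_n,\epsilon_n)_{n\in\mathbb{Z}}$ be a combinatorial lift of a Sturmian sequence $\epsilon\in\{H,V\}^{\mathbb{Z}}$. Let $M$ be the minimal number of $H$'s between two consecutive $V$'s in $\epsilon$, let $(n_i)_{i\in\mathbb{Z}}$ be the increasing enumeration of the indices $n$ with $\epsilon_n=V$, and set $\mu_i=\lambda_{n_i}$, $\sigma_i=L$ if $n_{i+1}-n_i=M+1$ and $\sigma_i=R$ if $n_{i+1}-n_i=M+2$. Then the sequence $(\mu_i,\sigma_i)_{i\in\mathbb{Z}}$ is minimal.
   Context: A Sturmian sequence is a biinfinite sequence over two letters that is not eventually periodic and has exactly $n+1$ distinct subwords of each length $n$; in a Sturmian cutting sequence every block of $H$'s between consecutive $V$'s has length $M$ or $M+1$. A combinatorial lift of $\epsilon$ (a cutting sequence of a geodesic on the square torus, whose top/bottom edge is labeled $V$ and left/right edges $H$) is a sequence $(\lambda_n,\epsilon_n)$ with $\lambda_{n+1}=h(\lambda_n)$ if $\epsilon_{n+1}=H$ and $\lambda_{n+1}=v(\lambda_n)$ if $\epsilon_{n+1}=V$. A biinfinite sequence is minimal if for every finite word $w$ occurring in it there is $N$ such that every subword of length at least $N$ contains $w$. *)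

(* Defs.v *)
From HB Require Import structures.
From mathcomp Require Import all_boot all_order all_algebra all_fingroup.
Set Implicit Arguments. Unset Strict Implicit. Unset Printing Implicit Defensive.
Import Order.TTheory GRing.Theory Num.Theory.
Local Open Scope ring_scope.

(* Letters of the cutting sequence: H (horizontal side), V (vertical side). *)
Inductive HV := H | V.
Definition HV_to_bool (a : HV) : bool := if a is V then true else false.
Definition bool_to_HV (b : bool) : HV := if b then V else H.
Lemma HV_boolK : cancel HV_to_bool bool_to_HV. Proof. by case. Qed.
HB.instance Definition _ := Equality.copy HV (can_type HV_boolK).

Inductive LR := L | R.
Definition LR_to_bool (a : LR) : bool := if a is R then true else false.
Definition bool_to_LR (b : bool) : LR := if b then R else L.
Lemma LR_boolK : cancel LR_to_bool bool_to_LR. Proof. by case. Qed.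
HB.instance Definition _ := Equality.copy LR (can_type LR_boolK).

Definition subw (T : Type) (x : int -> T) (k : int) (n : nat) : seq T :=
  mkseq (fun i => x (k + i%:Z)) n.

Definition eventually_periodic (T : Type) (x : int -> T) : Prop :=
  exists p : nat, (0 < p)%N /\ exists N : int,
    forall n : int, N <= n -> x (n + p%:Z) = x n.

Definition complexity_n_plus_1 (T : eqType) (x : int -> T) : Prop :=
  forall n : nat, exists s : seq (seq T),
    [/\ uniq s, size s = n.+1 &
        forall w, w \in s <-> exists k : int, subw x k n = w].

Definition sturmian (T : eqType) (x : int -> T) : Prop :=
  ~ eventually_periodic x /\ complexity_n_plus_1 x.

Definition comb_lift (d : nat) (h v : {perm 'I_d}) (lam : int -> 'I_d)
    (eps : int -> HV) : Prop :=
  forall n : int, lam (n + 1) = (if eps (n + 1) == H then h (lam n) else v (lam n)).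

Definition minimal_seq (T : eqType) (x : int -> T) : Prop :=
  forall w : seq T, (exists k : int, subw x k (size w) = w) ->
    exists N : nat, forall (k : int) (m : nat), (N <= m)%N -> infix w (subw x k m).

Definition derived_seq (d : nat) (lam : int -> 'I_d) (nn : int -> int) (M : nat)
    (i : int) : 'I_d * LR :=
  (lam (nn i), if nn (i + 1) - nn i == (M.+1)%:Z then L else R).

(* Main.v *)
Require Import Defs.
From HB Require Import structures.
From mathcomp Require Import all_boot all_order all_algebra all_fingroup.
From mathcomp Require Import zify.
From Stdlib Require Import Classical ClassicalEpsilon.
Import Order.TTheory GRing.Theory Num.Theory.
Local Open Scope ring_scope.
Set Implicit Arguments. Unset Strict Implicit.

Lemma size_subw (T : Type) (x : int -> T) k n : size (subw x k n) = n.
Proof. by rewrite size_mkseq. Qed.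

Lemma subw_eqP (T : Type) (x y : int -> T) a b n :
  subw x a n = subw y b n <-> forall i : nat, (i < n)%N -> x (a + i%:Z) = y (b + i%:Z).
Proof.
split.
- move=> E i lt; have := congr1 (fun s => nth (x a) s i) E => /=.
  by rewrite /subw !nth_mkseq.
- move=> H; apply: (@eq_from_nth _ (x a)); first by rewrite !size_subw.
  move=> i; rewrite size_subw => lt; rewrite /subw !nth_mkseq //; exact: H.
Qed.

Lemma subwS (T : Type) (x : int -> T) a n :
  subw x a n.+1 = rcons (subw x a n) (x (a + n%:Z)).
Proof. by rewrite /subw mkseqS. Qed.

Lemma subw_shift (T : Type) (x : int -> T) a b n :
  subw x a n = subw x b n -> x (a + n%:Z) = x (b + n%:Z) ->
  subw x (a + 1) n = subw x (b + 1) n.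
Proof.
move=> /subw_eqP E L; apply/subw_eqP => i lt.
have [lt2|eq2] := ltnP i.+1 n.
- have := E _ lt2; have e : (1 + i%:Z) = i.+1%:Z by lia.
  by rewrite -!addrA e.
- have -> : i = n.-1 by lia.
  have e : (1 + (n.-1)%:Z) = n%:Z by lia.
  by rewrite -!addrA e.
Qed.

Lemma subw_cat (T : Type) (x : int -> T) a n1 n2 :
  subw x a (n1 + n2) = subw x a n1 ++ subw x (a + n1%:Z) n2.
Proof.
apply: (@eq_from_nth _ (x a)); first by rewrite size_cat !size_subw.
move=> i; rewrite size_subw => lt; rewrite nth_cat size_subw /subw nth_mkseq //.
case: ltnP => h; first by rewrite nth_mkseq.
rewrite nth_mkseq; last by lia.
congr x; lia.
Qed.

Definition cplx (x : int -> HV) (S : nat -> seq (seq HV)) :=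
  forall n, [/\ uniq (S n), size (S n) = n.+1 &
        forall w, w \in S n <-> exists k : int, subw x k n = w].

Definition special (S : nat -> seq (seq HV)) m (v : seq HV) :=
  (rcons v H \in S m.+1) && (rcons v V \in S m.+1).

Lemma subw_in x S k n : cplx x S -> subw x k n \in S n.
Proof. by move=> c; case: (c n) => _ _ ->; exists k. Qed.

Lemma nonspecial_next x S a b m : cplx x S ->
  subw x a m = subw x b m -> ~~ special S m (subw x a m) ->
  x (a + m%:Z) = x (b + m%:Z).
Proof.
move=> c E ns; apply/eqP/negPn/negP => ne; move/negP: ns; apply.
have h1 := subw_in a m.+1 c; have h2 := subw_in b m.+1 c.
rewrite subwS in h1; rewrite subwS -E in h2.
rewrite /special; move: ne h1 h2.
by case: (x (a + m%:Z)); case: (x (b + m%:Z)) => // _ -> ->.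
Qed.

Lemma special_in x S m u c : cplx x S -> rcons u c \in S m.+1 -> u \in S m.
Proof.
move=> cx; case: (cx m.+1) => _ _ ->; case=> k; rewrite subwS => /rcons_inj [<- _].
exact: subw_in.
Qed.

Lemma special_uniq x S m u u' : cplx x S ->
  special S m u -> special S m u' -> u = u'.
Proof.
move=> cx /andP [uH uV] /andP [u'H u'V]; apply/eqP/negPn/negP => ne.
case: (cx m) => uS sS memS; case: (cx m.+1) => uS1 sS1 memS1.
pose e v := if rcons v H \in S m.+1 then rcons v H else rcons v V.
have einj : injective e.
  move=> v1 v2; rewrite /e; by do 2 case: ifP => _; move/rcons_inj => [].
have sub : {subset [:: rcons u V, rcons u' V & map e (S m)] <= S m.+1}.
  move=> z; rewrite !inE => /or3P [/eqP ->|/eqP ->|] //.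
  case/mapP => y /memS [k <-] ->; rewrite /e; case: ifP => // nH.
  have := subw_in k m.+1 cx; rewrite subwS; case: (x _) => //; by rewrite nH.
have un : uniq [:: rcons u V, rcons u' V & map e (S m)].
  rewrite /= (map_inj_uniq einj) uS andbT inE.
  have nm : forall z, special S m z -> rcons z V \notin map e (S m).
    move=> z /andP [zH _]; apply/mapP => [[y _]]; rewrite /e.
    case: ifP => Hy E; have := rcons_inj E; case=> //.
    by move=> ezy; subst; rewrite zH in Hy.
  rewrite !nm /= ?andbT //; last by apply/andP.
  rewrite negb_or nm ?andbT; last by apply/andP.
  apply/negP => /eqP E; have := rcons_inj E; case=> e1; by rewrite e1 eqxx in ne.
have := uniq_leq_size un sub; by rewrite /= size_map sS sS1 ltnn.
Qed.

Lemma pigeon x S m (f : nat -> int) : cplx x S ->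
  exists i j, (i < j <= m.+1)%N /\ subw x (f i) m = subw x (f j) m.
Proof.
move=> cx; pose s := map (fun i => subw x (f i) m) (iota 0 m.+2).
have [us|nus] := boolP (uniq s).
  case: (cx m) => _ sS memS.
  have sub : {subset s <= S m} by move=> z /mapP [i _ ->]; exact: subw_in.
  by have := uniq_leq_size us sub; rewrite size_map size_iota sS ltnn.
case/(uniqPn [::]): nus => i [j [lij]]; rewrite size_map size_iota => ljs.
rewrite !(nth_map 0) ?size_iota; try lia.
rewrite !nth_iota; try lia.
move=> E; exists i, j; split; first lia. by rewrite !add0n in E.
Qed.

Lemma window_has_special x S k m : cplx x S -> ~ eventually_periodic x ->
  exists s : nat, (s <= m.+2)%N /\ special S m.+1 (subw x (k + s%:Z) m.+1).
Proof.
move=> cx nep; apply: NNPP => Hn.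
have ns : forall s : nat, (s <= m.+2)%N -> ~~ special S m.+1 (subw x (k + s%:Z) m.+1).
  move=> s ls; apply/negP => sp; apply: Hn; by exists s.
have [i [j [lij E]]] := pigeon m.+1 (fun i : nat => k + i%:Z) cx.
pose dd := (j - i)%N.
have C1 : forall t : nat, exists r : nat, (r < dd)%N /\
    subw x (k + (i + t)%:Z) m.+1 = subw x (k + (i + r)%:Z) m.+1.
  elim=> [|t [r [lr Er]]]; first by exists 0%N; split; [lia|rewrite addn0].
  have nsr : ~~ special S m.+1 (subw x (k + (i + t)%:Z) m.+1).
    by rewrite Er; apply: ns; lia.
  have nx := nonspecial_next cx Er nsr.
  have Er1 := subw_shift Er nx.
  have e1 : forall a : nat, k + (a.+1)%:Z = k + a%:Z + 1 by move=> a; lia.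
  rewrite addnS e1 Er1 -e1 -addnS.
  have [lr1|er1] := ltnP r.+1 dd; first by exists r.+1.
  exists 0%N; split; first lia.
  have -> : (i + r.+1 = j)%N by lia.
  by rewrite -E addn0.
have C2 : forall t : nat,
    subw x (k + (i + t + dd)%:Z) m.+1 = subw x (k + (i + t)%:Z) m.+1.
  elim=> [|t IH]; first by rewrite addn0 (_ : (i + dd = j)%N) -?E //; lia.
  have [r [lr Er]] := C1 t.
  have nsr : ~~ special S m.+1 (subw x (k + (i + t + dd)%:Z) m.+1).
    by rewrite IH Er; apply: ns; lia.
  have nx := nonspecial_next cx IH nsr.
  have Er1 := subw_shift IH nx.
  have e1 : forall a : nat, k + (a.+1)%:Z = k + a%:Z + 1 by move=> a; lia.
  by rewrite (_ : (i + t.+1 + dd = (i + t + dd).+1)%N) ?e1 ?Er1 -?e1 ?addnS //; lia.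
apply: nep; exists dd; split; first lia.
exists (k + i%:Z) => n ln.
have [t ->] : exists t : nat, n = k + (i + t)%:Z.
  exists (absz (n - (k + i%:Z))%R); lia.
have := C2 t; move/subw_eqP => /(_ 0%N isT).
by rewrite !addr0 -!addrA -PoszD.
Qed.

Lemma KL x S (P : nat) : cplx x S -> ~ eventually_periodic x -> (0 < P)%N ->
  (forall m : nat, exists k : int, forall i : nat, (i + P < m)%N ->
      x (k + (i + P)%:Z) = x (k + i%:Z)) -> False.
Proof.
move=> cx nep P0 hper.
have sper : forall (m : nat) (s : int), special S m.+1 (subw x s m.+1) ->
    forall i : nat, (i + P < m.+1)%N -> x (s + (i + P)%:Z) = x (s + i%:Z).
  move=> m s sp i li.
  have [k hk] := hper (2 * m + 3)%N.
  have [s0 [ls0 sp0]] := window_has_special k m cx nep.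
  have E := special_uniq cx sp0 sp.
  move/subw_eqP: E => E.
  rewrite -E; last lia. rewrite -E; last lia.
  rewrite -!addrA -!PoszD.
  have := hk (s0 + i)%N; rewrite addnA => ->; last lia. by [].
have [[b hb]|nb] := classic (exists b, x b <> x (b - P%:Z)).
- apply nep; exists P; split => //; exists (b + 2) => n ln.
  pose m := absz (n - b + 2 * P%:Z - 1)%R.
  have [s [ls sp]] := window_has_special (b - m.+1%:Z + 1) m cx nep.
  have sp1 := sper _ _ sp.
  have [le|gt] := boolP (b - m.+1%:Z + 1 + s%:Z <= b - P%:Z).
  + exfalso; apply: hb.
    have := sp1 (absz (b - P%:Z - (b - m.+1%:Z + 1 + s%:Z))%R).
    have e1 : b - m.+1%:Z + 1 + s%:Z + (absz (b - P%:Z - (b - m.+1%:Z + 1 + s%:Z))%R + P)%:Z = b by lia.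
    have e2 : b - m.+1%:Z + 1 + s%:Z + (absz (b - P%:Z - (b - m.+1%:Z + 1 + s%:Z))%R)%:Z = b - P%:Z by lia.
    rewrite e1 e2; apply; lia.
  + rewrite -ltNge in gt.
    have := sp1 (absz (n - (b - m.+1%:Z + 1 + s%:Z))%R).
    have e1 : b - m.+1%:Z + 1 + s%:Z + (absz (n - (b - m.+1%:Z + 1 + s%:Z))%R + P)%:Z = n + P%:Z by lia.
    have e2 : b - m.+1%:Z + 1 + s%:Z + (absz (n - (b - m.+1%:Z + 1 + s%:Z))%R)%:Z = n by lia.
    rewrite e1 e2; apply; lia.
- apply: nep; exists P; split => //; exists 0 => n _.
  apply: NNPP => ne; apply: nb; exists (n + P%:Z).
  by rewrite addrK => e; apply: ne.
Qed.

Lemma per_mult (f : nat -> HV) dd L :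
  (forall q, (q + dd < L)%N -> f (q + dd)%N = f q) ->
  forall r q, (q + r * dd < L)%N -> f (q + r * dd)%N = f q.
Proof.
move=> hf; elim=> [|r IH] q lq; first by rewrite mul0n addn0.
rewrite mulSn (addnC dd) addnA hf; last by move: lq; rewrite mulSn; lia.
apply: IH; move: lq; rewrite mulSn; lia.
Qed.

Lemma HV_neq2 (a b c : HV) : a <> c -> b <> c -> a = b.
Proof. by case: a; case: b; case: c. Qed.


Lemma UR x S : cplx x S -> ~ eventually_periodic x ->
  forall w, (exists t0, subw x t0 (size w) = w) ->
  exists N : nat, forall c : int, exists b : nat,
    (b + size w <= N)%N /\ subw x (c + b%:Z) (size w) = w.
Proof.
move=> cx nep w [t0 Ew].
case En: (size w) => [|n'].
  exists 0%N => c; exists 0%N; split => //.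
  by move/eqP: En; rewrite size_eq0 => /eqP ->; rewrite /subw.
set n := n'.+1. rewrite En in Ew.
apply: NNPP => Hn.
have Hn' : forall N : nat, exists c : int, forall b : nat, (b + n <= N)%N ->
    subw x (c + b%:Z) n <> w.
  move=> N; apply: NNPP => Hc; apply: Hn; exists N => c; apply: NNPP => Hb.
  apply: Hc; exists c => b lb E; apply: Hb; exists b; split => //.
have exd : exists d : nat, special S n (subw x (t0 - d%:Z) n).
  have [s [ls sp]] := window_has_special (t0 - (n'.+2)%:Z) n' cx nep.
  exists (n'.+2 - s)%N.
  have -> : t0 - (n'.+2 - s)%N%:Z = t0 - (n'.+2)%:Z + s%:Z by lia.
  exact: sp.
case: (ex_minnP exd) => dmin spd mind.
have dmle : (dmin <= n.+1)%N.
  have [s [ls sp]] := window_has_special (t0 - (n'.+2)%:Z) n' cx nep.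
  have e1 : t0 - (n'.+2 - s)%N%:Z = t0 - (n'.+2)%:Z + s%:Z by lia.
  have := mind (n'.+2 - s)%N; rewrite e1 => /(_ sp); lia.
set r := subw x (t0 - dmin%:Z) n.
have ClA : forall a : int, subw x a n = r -> (0 < dmin)%N ->
    x (a + n%:Z) = x (t0 - dmin%:Z + n%:Z) ->
    forall e : nat, (e <= dmin)%N ->
      subw x (a + e%:Z) n = subw x (t0 - dmin%:Z + e%:Z) n.
  move=> a Ea d0 La; elim=> [|e IH] le; first by rewrite !addr0.
  have IH' := IH (ltnW le).
  have nx : x (a + e%:Z + n%:Z) = x (t0 - dmin%:Z + e%:Z + n%:Z).
    case: e IH IH' le => [|e] IH IH' le; first by rewrite !addr0.
    apply: (nonspecial_next cx IH').
    rewrite IH'; apply/negP => sp.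
    have e1 : t0 - (dmin - e.+1)%N%:Z = t0 - dmin%:Z + e.+1%:Z by lia.
    have := mind (dmin - e.+1)%N; rewrite e1 => /(_ sp); lia.
  have := subw_shift IH' nx.
  have e1 : a + e%:Z + 1 = a + e.+1%:Z by lia.
  have e2 : t0 - dmin%:Z + e%:Z + 1 = t0 - dmin%:Z + e.+1%:Z by lia.
  by rewrite e1 e2.
apply: (KL cx nep (fact_gt0 n.+1)) => L.
pose N := (L + 4 * n + 4)%N.
have [c Hc] := Hn' N.
have d0 : (0 < dmin)%N.
  case: posnP => // dz; exfalso.
  have [s [ls sp]] := window_has_special c n' cx nep.
  rewrite dz subr0 Ew in spd.
  have := special_uniq cx sp spd; apply: Hc; lia.
have Det : forall b1 b2 : nat, (b1 + dmin + n <= N)%N -> (b2 + dmin + n <= N)%N ->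
    subw x (c + b1%:Z) n = subw x (c + b2%:Z) n ->
    x (c + b1%:Z + n%:Z) = x (c + b2%:Z + n%:Z).
  move=> b1 b2 l1 l2 E.
  have [sp|nsp] := boolP (special S n (subw x (c + b1%:Z) n)); last first.
    exact: (nonspecial_next cx E nsp).
  have ne : forall b : nat, (b + dmin + n <= N)%N -> subw x (c + b%:Z) n = r ->
      x (c + b%:Z + n%:Z) <> x (t0 - dmin%:Z + n%:Z).
    move=> b lb Eb Lb.
    have := ClA _ Eb d0 Lb dmin (leqnn _).
    have e1 : t0 - dmin%:Z + dmin%:Z = t0 by lia.
    have e2 : c + b%:Z + dmin%:Z = c + (b + dmin)%N%:Z by lia.
    rewrite e1 e2 Ew; apply: Hc; lia.
  have E1 := special_uniq cx sp spd.
  apply: (HV_neq2 (ne _ l1 E1) (ne _ l2 _)); by rewrite -E.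
have [i [j [lij Eij]]] := pigeon n (fun i : nat => c + i%:Z) cx.
have Cl : forall t : nat, (j + t + dmin + n <= N)%N ->
    subw x (c + (i + t)%:Z) n = subw x (c + (j + t)%:Z) n.
  elim=> [|t IH] lt; first by rewrite !addn0.
  have IH' := IH ltac:(lia).
  have nx := Det (i + t)%N (j + t)%N ltac:(lia) ltac:(lia) IH'.
  have := subw_shift IH' nx.
  have e1 : forall a : nat, c + a%:Z + 1 = c + a.+1%:Z by move=> a; lia.
  by rewrite !e1 !addnS.
pose dd := (j - i)%N.
have hf : forall q, (q + dd < L)%N ->
    (fun q : nat => x (c + i%:Z + q%:Z)) (q + dd)%N = (fun q : nat => x (c + i%:Z + q%:Z)) q.
  move=> q lq /=.
  have := Cl q ltac:(lia); move/subw_eqP => /(_ 0%N ltac:(lia)).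
  have e1 : c + (i + q)%N%:Z + 0%N%:Z = c + i%:Z + q%:Z by lia.
  have e2 : c + (j + q)%N%:Z + 0%N%:Z = c + i%:Z + (q + dd)%N%:Z by lia.
  by rewrite e1 e2 => ->.
have pm := per_mult hf.
have dv : (dd %| (n.+1)`!)%N by apply: dvdn_fact; lia.
exists (c + i%:Z) => q lq.
have := pm ((n.+1)`! %/ dd)%N q; rewrite divnK // => ->; last by [].
by [].
Qed.

Definition fperm d (h v : {perm 'I_d}) (eps : int -> HV) (n : int) : {perm 'I_d} :=
  if eps n == H then h else v.

Fixpoint Ppos d (h v : {perm 'I_d}) eps (k : nat) : {perm 'I_d} :=
  if k is k'.+1 then (Ppos h v eps k' * fperm h v eps k%:Z)%g else 1%g.
Fixpoint Pneg d (h v : {perm 'I_d}) eps (k : nat) : {perm 'I_d} :=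
  if k is k'.+1 then (Pneg h v eps k' * (fperm h v eps (- k'%:Z))^-1)%g else 1%g.
Definition Pz d (h v : {perm 'I_d}) eps (z : int) : {perm 'I_d} :=
  match z with Posz k => Ppos h v eps k | Negz k => Pneg h v eps k.+1 end.

Lemma PzS d (h v : {perm 'I_d}) eps z :
  Pz h v eps (z + 1) = (Pz h v eps z * fperm h v eps (z + 1))%g.
Proof.
case: z => k.
- have -> : Posz k + 1 = Posz k.+1 by lia. by [].
- case: k => [|k].
  + have -> : Negz 0 + 1 = Posz 0 by [].
    have e : - 0%:Z = Negz 0 + 1 by [].
    by rewrite /= mul1g e mulVg.
  + have -> : Negz k.+1 + 1 = Negz k by rewrite !NegzE; lia.
    have e : Negz k = - k.+1%:Z by rewrite !NegzE; lia.
    by rewrite /= -mulgA e mulVg mulg1.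
Qed.

Lemma lam_P d (h v : {perm 'I_d}) eps lam : comb_lift h v lam eps ->
  forall z, lam z = Pz h v eps z (lam 0).
Proof.
move=> cl.
have step : forall z, lam z = Pz h v eps z (lam 0) <-> lam (z + 1) = Pz h v eps (z + 1) (lam 0).
  move=> z; rewrite cl PzS permM.
  have -> : (if eps (z + 1) == H then h (lam z) else v (lam z)) = fperm h v eps (z + 1) (lam z).
    by rewrite /fperm; case: (eps _ == H).
  split; first by move=> ->.
  by move/perm_inj.
have pos : forall k : nat, lam k%:Z = Pz h v eps k%:Z (lam 0).
  elim=> [|k IH]; first by rewrite /= perm1.
  have e : k%:Z + 1 = k.+1%:Z by lia.
  by have := (step k%:Z).1 IH; rewrite e.
have neg : forall k : nat, lam (- k%:Z) = Pz h v eps (- k%:Z) (lam 0).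
  elim=> [|k IH]; first by rewrite oppr0 /= perm1.
  have e : - k.+1%:Z + 1 = - k%:Z by lia.
  by apply/(step _).2; rewrite e.
move=> z; case: (lerP 0 z) => hz.
- have -> : z = (absz z)%:Z by lia. exact: pos.
- have -> : z = - (absz z)%:Z by lia. exact: neg.
Qed.

Lemma hol_shift d (h v : {perm 'I_d}) eps (a b : int) (t : nat) :
  (forall j : nat, (0 < j <= t)%N -> eps (a + j%:Z) = eps (b + j%:Z)) ->
  ((Pz h v eps a)^-1 * Pz h v eps (a + t%:Z) = (Pz h v eps b)^-1 * Pz h v eps (b + t%:Z))%g.
Proof.
elim: t => [|t IH] H0.
  have e0 : forall c : int, c + 0%N%:Z = c by move=> c; lia.
  by rewrite !e0 !mulVg.
have e : forall c : int, c + t.+1%:Z = c + t%:Z + 1 by move=> c; lia.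
rewrite !e !PzS !mulgA IH; last by move=> j lj; apply: H0; lia.
congr (_ * _)%g; rewrite /fperm -!e H0 //; lia.
Qed.

Lemma fin_bound (T : finType) (Q : T -> nat -> Prop) :
  (forall g K K', (K <= K')%N -> Q g K -> Q g K') ->
  (forall g, exists K, Q g K) -> exists K, forall g, Q g K.
Proof.
move=> mono ex.
suff : exists K, forall g, g \in enum T -> Q g K.
  by case=> K HK; exists K => g; apply: HK; rewrite mem_enum.
elim: (enum T) => [|g s [K HK]]; first by exists 0%N.
have [K1 HK1] := ex g; exists (maxn K K1) => g'; rewrite inE => /orP [/eqP ->|gs].
- apply: mono HK1; exact: leq_maxr.
- apply: mono (HK _ gs); exact: leq_maxl.
Qed.

Lemma group_return d (h v : {perm 'I_d}) eps lam S :
  cplx eps S -> ~ eventually_periodic eps -> comb_lift h v lam eps ->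
  forall (a0 : int) (R : nat), exists N : nat, forall c : int, exists b : nat,
    [/\ (b + R <= N)%N, lam (c + b%:Z) = lam a0 &
       forall e : nat, (e <= R)%N -> eps (c + b%:Z + e%:Z) = eps (a0 + e%:Z)].
Proof.
move=> cx nep cl a0 R.
pose P := Pz h v eps.
pose K (s : int) := ((P a0)^-1 * P (a0 + s))%g.
pose inS (R : nat) (s : int) := forall i : int, - R%:Z <= i <= R%:Z -> eps (a0 + s + i) = eps (a0 + i).
have Kmul : forall (R' : nat) s t, inS R' s -> - R'%:Z <= t <= R'%:Z -> K (s + t) = (K s * K t)%g.
  move=> R' s t hs ht.
  suff E : ((P (a0 + s))^-1 * P (a0 + s + t) = (P a0)^-1 * P (a0 + t))%g.
    by rewrite /K -E !mulgA mulgK addrA.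
  case: (lerP 0 t) => t0.
  - have -> : t = (absz t)%:Z by lia.
    apply: hol_shift => j lj; apply: hs; lia.
  - have E := @hol_shift d h v eps (a0 + s + t) (a0 + t) (absz t) _.
    have e1 : a0 + s + t + (absz t)%:Z = a0 + s by lia.
    have e2 : a0 + t + (absz t)%:Z = a0 by lia.
    rewrite e1 e2 in E.
    have := congr1 (fun g => g^-1)%g (E _); rewrite !invMg !invgK; apply.
    move=> j lj.
    have := hs (t + j%:Z) ltac:(lia).
    by rewrite !addrA.
pose T g := exists t, inS R t /\ K t = g.
have [K0 HK0] : exists K0 : nat, forall g, T g ->
    exists t, [/\ - K0%:Z <= t <= K0%:Z, inS R t & K t = g].
  apply: (@fin_bound _ (fun g K0 => T g -> exists t, [/\ - K0%:Z <= t <= K0%:Z, inS R t & K t = g])).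
  - move=> g k k' lk Q Tg; have [t [lt it kt]] := Q Tg; exists t; split => //; lia.
  - move=> g; case: (classic (T g)) => [[t [it kt]]|nT].
    + exists (absz t) => _; exists t; split => //; lia.
    + by exists 0%N.
have [R' eR'] : exists R' : nat, R' = (R + K0)%N by eexists.
have [N' HN'] := UR cx nep (w := subw eps (a0 - R'%:Z) (2 * R' + 1)) (ex_intro _ _ (congr1 _ (size_subw _ _ _))).
exists N' => c.
have [sg [lsg Esg]] := HN' c; rewrite size_subw in lsg Esg.
pose s := c + sg%:Z + R'%:Z - a0.
have iS' : inS R' s.
  move=> i li; move/subw_eqP: Esg => /(_ (absz (R'%:Z + i)) ltac:(lia)).
  have e1 : c + sg%:Z + (absz (R'%:Z + i))%:Z = a0 + s + i by rewrite /s; lia.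
  have e2 : a0 - R'%:Z + (absz (R'%:Z + i))%:Z = a0 + i by lia.
  by rewrite e1 e2.
have Ts : T (K s).
  exists s; split => // i li; apply: iS'; lia.
have clo : forall g, T g -> T (K s * g)%g.
  move=> g /HK0 [t [lt it kt]]; exists (s + t); split; last first.
    rewrite (Kmul R') ?kt //; lia.
  move=> i li.
  have := iS' (t + i) ltac:(lia); rewrite !addrA => ->.
  exact: it i li.
have pw : forall j : nat, T (K s ^+ j)%g.
  elim=> [|j IH].
    exists 0; split; first by move=> i li; rewrite addr0.
    by rewrite /K addr0 mulVg expg0.
  by rewrite expgS; apply: clo.
have [t [lt it kt]] := HK0 _ (pw #[K s].-1%g).
rewrite -invg_expg in kt.
have K1 : K (s + t) = 1%g by rewrite (Kmul R') // ?kt ?mulgV //; lia.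
have Pe : P (a0 + (s + t)) = P a0.
  by rewrite -(mulKVg (P a0) (P (a0 + (s + t)))) -/(K (s + t)) K1 mulg1.
exists (absz (sg%:Z + R'%:Z + t)); split.
- lia.
- have e : c + (absz (sg%:Z + R'%:Z + t))%:Z = a0 + (s + t) by rewrite /s; lia.
  have Pe' : Pz h v eps (a0 + (s + t)) = Pz h v eps a0 := Pe.
  by rewrite e (lam_P cl (a0 + (s + t))) (lam_P cl a0) Pe'.
- move=> e le.
  have e1 : c + (absz (sg%:Z + R'%:Z + t))%:Z + e%:Z = a0 + (s + t) + e%:Z by rewrite /s; lia.
  rewrite e1; have := iS' (t + e%:Z) ltac:(lia); rewrite !addrA => ->.
  apply: it; lia.
Qed.

Lemma nn_ge (nn : int -> int) : (forall i, nn i < nn (i + 1)) ->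
  forall i (k : nat), nn i + k%:Z <= nn (i + k%:Z).
Proof.
move=> mono i; elim=> [|k IH]; first by rewrite !addr0.
have := mono (i + k%:Z); have e : i + k%:Z + 1 = i + k.+1%:Z by lia.
rewrite e; lia.
Qed.

Lemma nn_le (nn : int -> int) : (forall i, nn i < nn (i + 1)) ->
  forall i j, i <= j -> nn i <= nn j.
Proof.
move=> mono i j lij; have := nn_ge mono i (absz (j - i)).
have -> : i + (absz (j - i))%:Z = j by lia. lia.
Qed.

Lemma nn_lt (nn : int -> int) : (forall i, nn i < nn (i + 1)) ->
  forall i j, nn i < nn j -> i < j.
Proof.
move=> mono i j; case: (ltrP i j) => // lji; have := nn_le mono lji; lia.
Qed.

Lemma derived_match (eps : int -> HV) (nn : int -> int) :
  (forall i, nn i < nn (i + 1)) ->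
  (forall n : int, eps n = V <-> exists i : int, nn i = n) ->
  forall (i0 j : int) (l m : nat),
  (forall e : nat, (e <= l)%N -> eps (nn j + e%:Z) = eps (nn i0 + e%:Z)) ->
  nn (i0 + m%:Z) - nn i0 <= l%:Z ->
  forall q : nat, (q <= m)%N -> nn (j + q%:Z) - nn j = nn (i0 + q%:Z) - nn i0.
Proof.
move=> mono Viff i0 j l m heps hl; elim=> [|q IH] lq.
  have e0 : forall z : int, z + 0%N%:Z = z by move=> z; lia.
  by rewrite !e0 !subrr.
have IH' := IH (ltnW lq).
have ea : forall z : int, z + q.+1%:Z = z + q%:Z + 1 by move=> z; lia.
rewrite !ea.
have m1 := mono (i0 + q%:Z); have m2 := mono (j + q%:Z).
have l1 := @nn_le nn mono (i0 + q%:Z + 1) (i0 + m%:Z) ltac:(lia).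
have l0 := @nn_le nn mono i0 (i0 + q%:Z) ltac:(lia).
pose e1 := absz (nn (i0 + q%:Z + 1) - nn i0)%R.
have VX : eps (nn j + e1%:Z) = V.
  rewrite heps; last lia.
  apply/Viff; exists (i0 + q%:Z + 1); rewrite /e1; lia.
have [j1 ej1] := (Viff _).1 VX.
have lj1 : j + q%:Z < j1 by apply: (nn_lt mono); rewrite ej1 /e1; lia.
have g1 := @nn_le nn mono (j + q%:Z + 1) j1 ltac:(lia).
have VY : eps (nn (j + q%:Z + 1)) = V by apply/Viff; eexists.
case: (ltrP (nn (j + q%:Z + 1)) (nn j + e1%:Z)) => hY; last by rewrite /e1 in hY g1; lia.
exfalso.
pose e' := absz (nn (j + q%:Z + 1) - nn j)%R.
have : eps (nn i0 + e'%:Z) = V.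
  rewrite -heps; last by rewrite /e' /e1 in hY *; lia.
  by rewrite (_ : nn j + e'%:Z = nn (j + q%:Z + 1)) // /e'; lia.
case/Viff => i2 ei2.
have a1 : i0 + q%:Z < i2 by apply: (nn_lt mono); rewrite ei2 /e'; lia.
have a2 : i2 < i0 + q%:Z + 1 by apply: (nn_lt mono); rewrite ei2 /e' /e1 in hY *; lia.
lia.
Qed.

Lemma lam_match d (h v : {perm 'I_d}) eps lam (a b : int) (l : nat) :
  comb_lift h v lam eps -> lam b = lam a ->
  (forall e : nat, (e <= l)%N -> eps (b + e%:Z) = eps (a + e%:Z)) ->
  forall e : nat, (e <= l)%N -> lam (b + e%:Z) = lam (a + e%:Z).
Proof.
move=> cl lb he; elim=> [|e IH] le.
  have e0 : forall z : int, z + 0%N%:Z = z by move=> z; lia.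
  by rewrite !e0.
have ea : forall z : int, z + e.+1%:Z = z + e%:Z + 1 by move=> z; lia.
rewrite !ea !cl -!ea he // IH //; lia.
Qed.

Unset Implicit Arguments.

Theorem corollary5p6 (d : nat) (h v : {perm 'I_d}) (eps : int -> HV)
  (lam : int -> 'I_d) (nn : int -> int) (M : nat) :
  sturmian eps ->
  comb_lift h v lam eps ->
  (forall i : int, nn i < nn (i + 1)) ->
  (forall n : int, eps n = V <-> exists i : int, nn i = n) ->
  (forall i : int, (M%:Z) <= nn (i + 1) - nn i - 1) ->
  (exists i : int, nn (i + 1) - nn i - 1 = M%:Z) ->
  minimal_seq (derived_seq lam nn M).
Proof.
move=> [nep cplxe] cl mono Viff _ _.
have [S cx] : exists S, cplx eps S.
  exists (fun n => proj1_sig (constructive_indefinite_description _ (cplxe n))).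
  move=> n; exact: (proj2_sig (constructive_indefinite_description _ (cplxe n))).
move=> w [i0 Ew].
set m := size w in Ew *.
set a0 := nn i0.
have la := @nn_le nn mono i0 (i0 + m%:Z) ltac:(lia).
pose l := absz (nn (i0 + m%:Z) - a0)%R.
have [N HN] := group_return cx nep cl a0 l.
exists N => j m' lm'.
have [b [lb lamb epsb]] := HN (nn j).
have Vb : eps (nn j + b%:Z) = V.
  have := epsb 0%N isT; rewrite (_ : nn j + b%:Z + 0%N%:Z = nn j + b%:Z); last lia.
  move=> ->; apply/Viff; exists i0; rewrite /a0; lia.
have [j' ej'] := (Viff _).1 Vb.
have jj' : j <= j'.
  case: (ltrP j' j) => // hj; exfalso.
  have := nn_ge mono j' (absz (j - j')%R).
  rewrite (_ : j' + (absz (j - j')%R)%:Z = j); lia.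
have heps : forall e : nat, (e <= l)%N -> eps (nn j' + e%:Z) = eps (nn i0 + e%:Z).
  by move=> e le; rewrite ej' epsb.
have hl : nn (i0 + m%:Z) - nn i0 <= l%:Z by rewrite /l /a0; lia.
have dm := derived_match mono Viff heps hl.
have hend := dm m (leqnn m).
have jm : j' + m%:Z <= j + m'%:Z.
  case: (ltrP (j + m'%:Z) (j' + m%:Z)) => // hj; exfalso.
  have := nn_ge mono (j + m'%:Z) (absz (j' + m%:Z - (j + m'%:Z))%R).
  rewrite (_ : j + m'%:Z + (absz (j' + m%:Z - (j + m'%:Z))%R)%:Z = j' + m%:Z); last lia.
  have := nn_ge mono j m'. rewrite /a0 /l in hend *; lia.
have Ew' : subw (derived_seq lam nn M) j' m = w.
  rewrite -Ew; apply/subw_eqP => q lq.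
  have d1 := dm q (ltnW lq); have d2 := dm q.+1 lq.
  have ea : forall z : int, z + q.+1%:Z = z + q%:Z + 1 by move=> z; lia.
  rewrite !ea in d2.
  rewrite /derived_seq; congr pair; last first.
    by rewrite (_ : nn (j' + q%:Z + 1) - nn (j' + q%:Z) = nn (i0 + q%:Z + 1) - nn (i0 + q%:Z)) //; lia.
  have l0 := @nn_le nn mono i0 (i0 + q%:Z) ltac:(lia).
  have l1 := @nn_le nn mono (i0 + q%:Z) (i0 + m%:Z) ltac:(lia).
  pose eq := absz (nn (i0 + q%:Z) - nn i0)%R.
  have lm := @lam_match d h v eps lam (nn i0) (nn j') l cl.
  have := lm ltac:(by rewrite ej') heps eq ltac:(rewrite /eq /l /a0; lia).
  rewrite (_ : nn j' + eq%:Z = nn (j' + q%:Z)); last by rewrite /eq; lia.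
  by rewrite (_ : nn i0 + eq%:Z = nn (i0 + q%:Z)) //; rewrite /eq; lia.
pose k1 := absz (j' - j)%R.
pose k2 := absz (j + m'%:Z - (j' + m%:Z))%R.
rewrite (_ : m' = (k1 + (m + k2))%N); last by rewrite /k1 /k2; lia.
rewrite !subw_cat (_ : j + k1%:Z = j'); last by rewrite /k1; lia.
rewrite Ew'; exact: infix_infix.
Qed.
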